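(* Let $\mathbb{E}$ be a finite-dimensional Euclidean space, $\mathcal{K}\subseteq\mathbb{E}$ a closed convex cone, $\mathcal{A}:\mathbb{E}\to\mathbb{R}^m$ a surjective linear map and $b\in\mathbb{R}^m$, and let $\mathcal{F}=\{x\in\mathcal{K}:\mathcal{A}x=b\}\neq\emptyset$. Suppose strict feasibility fails for $\mathcal{F}$ and let $\bar{\mathcal{K}}$ be the cone obtained by the facial reduction process. Then $\mathcal{A}(\operatorname{span}\bar{\mathcal{K}})$ is a subspace of dimension at most $m-\operatorname{maxsd}(\mathcal{F})$. Moreover, $\{x\in\bar{\mathcal{K}}:\mathcal{A}x=b\}$ contains at least $\operatorname{maxsd}(\mathcal{F})$ implicitly redundant constraints, i.e. $m-\dim\mathcal{A}(\operatorname{span}\bar{\mathcal{K}})\ge\operatorname{maxsd}(\mathcal{F})$.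
   Context: Strict feasibility of $\{x\in C:\mathcal{A}x=b\}$ with respect to a closed convex cone $C$ means that this set contains a point of $\operatorname{relint}(C)$. For a cone $C$, $C^*$ is its dual cone and $C^\perp$ its orthogonal complement. Facial reduction process: set $\mathcal{K}^0=\mathcal{K}$, $k=0$; while strict feasibility fails for $\{x\in\mathcal{K}^k:\mathcal{A}x=b\}$ with respect to $\mathcal{K}^k$, increase $k$ by one, choose $y^k\in\mathbb{R}^m$ with $\mathcal{A}^*y^k\in(\mathcal{K}^{k-1})^*\setminus(\mathcal{K}^{k-1})^\perp$ and $\langle b,y^k\rangle=0$, and set $\mathcal{K}^k=\mathcal{K}^{k-1}\cap(\mathcal{A}^*y^k)^\perp$. The cone obtained by the process is the final $\bar{\mathcal{K}}=\mathcal{K}^k=\mathcal{K}\cap\bigcap_{i=1}^k(\mathcal{A}^*y^i)^\perp$. The max-singularity degree $\operatorname{maxsd}(\mathcal{F})$ is the largest number of (nontrivial) iterations over all runs of this facial reduction process on $\mathcal{F}$. The number of implicitly redundant constraints in $\{x\in\bar{\mathcal{K}}:\mathcal{A}x=b\}$ is the number of redundant equalities among $\mathcal{A}x=b$ when $x$ is restricted to $\operatorname{span}\bar{\mathcal{K}}$, i.e. $m$ minus the rank of $\mathcal{A}$ restricted to $\operatorname{span}\bar{\mathcal{K}}$. *)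

(* Defs.v *)
(* The Euclidean space E is modelled as R^n = 'rV[R]_n with the standard
   inner product; the linear map A : E -> R^m is x |-> x *m A with
   A : 'M[R]_(n, m); its adjoint is y |-> y *m A^T. *)
From HB Require Import structures.
From mathcomp Require Import all_boot all_order all_algebra.
From mathcomp Require Import all_classical all_reals all_analysis.
Set Implicit Arguments. Unset Strict Implicit. Unset Printing Implicit Defensive.
Import Order.TTheory GRing.Theory Num.Theory.
Import numFieldNormedType.Exports.
Local Open Scope classical_set_scope.
Local Open Scope ring_scope.

Section FR.
Variables (R : realType) (n m : nat).

Definition dotv (x y : 'rV[R]_n) : R := (x *m y^T) 0 0.

Definition closed_convex_cone (C : set 'rV[R]_n) : Prop :=
  [/\ C 0,
      (forall x y, C x -> C y -> C (x + y)),
      (forall (t : R) x, 0 <= t -> C x -> C (t *: x)) &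
      closed (C : set 'rV[R]_n)].

Definition span (C : set 'rV[R]_n) : set 'rV[R]_n :=
  [set y | exists (k : nat) (c : 'I_k -> R) (v : 'I_k -> 'rV[R]_n),
           (forall i, C (v i)) /\ y = \sum_(i < k) c i *: v i].

(* relative interior (interior relative to the affine hull, which for a
   cone containing 0 is its span) *)
Definition relint (C : set 'rV[R]_n) : set 'rV[R]_n :=
  [set x | C x /\ exists U : set 'rV[R]_n, nbhs x U /\ (U `&` span C `<=` C)].

Definition in_dual (C : set 'rV[R]_n) (a : 'rV[R]_n) : Prop :=
  forall x, C x -> 0 <= dotv a x.
Definition in_perp (C : set 'rV[R]_n) (a : 'rV[R]_n) : Prop :=
  forall x, C x -> dotv a x = 0.

Variables (A : 'M[R]_(n, m)) (b : 'rV[R]_m).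

Definition strictly_feasible (C : set 'rV[R]_n) : Prop :=
  exists x, relint C x /\ x *m A = b.

Definition fr_step (C : set 'rV[R]_n) (y : 'rV[R]_m) : set 'rV[R]_n :=
  C `&` [set x | dotv (y *m A^T) x = 0].

Definition fr_cone (C : set 'rV[R]_n) (ys : seq 'rV[R]_m) : set 'rV[R]_n :=
  foldl fr_step C ys.

Fixpoint fr_valid (C : set 'rV[R]_n) (ys : seq 'rV[R]_m) : Prop :=
  match ys with
  | [::] => True
  | y :: ys' =>
      [/\ ~ strictly_feasible C,
          in_dual C (y *m A^T),
          ~ in_perp C (y *m A^T),
          (b *m y^T) 0 0 = 0 &
          fr_valid (fr_step C y) ys']
  end.

Definition fr_run (K : set 'rV[R]_n) (ys : seq 'rV[R]_m) : Prop :=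
  fr_valid K ys /\ strictly_feasible (fr_cone K ys).

(* Every run has at most n iterations (each step strictly lowers the
   dimension of the span), so the maximum over d <= n is the true maximum. *)
Definition maxsd (K : set 'rV[R]_n) : nat :=
  (\max_(d < n.+1 | `[< exists ys, fr_run K ys /\ size ys = d >]) (d : nat))%N.

End FR.

Definition is_subspace (R : realType) (m : nat) (S : set 'rV[R]_m) : Prop :=
  [/\ S 0, (forall x y, S x -> S y -> S (x + y)) &
      (forall (t : R) x, S x -> S (t *: x))].

Definition dim_set (R : realType) (m : nat) (S : set 'rV[R]_m) : nat :=
  (\max_(k < m.+1 | `[< exists M : 'M[R]_(k, m),
                         row_free M /\ forall i, S (row i M) >]) (k : nat))%N.

Definition image_span (R : realType) (n m : nat) (A : 'M[R]_(n, m))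
  (C : set 'rV[R]_n) : set 'rV[R]_m :=
  [set z | exists x, span C x /\ z = x *m A].

(* Main.v *)
Require Import Defs.
From HB Require Import structures.
From mathcomp Require Import all_boot all_order all_algebra.
From mathcomp Require Import all_classical all_reals all_analysis.
Set Implicit Arguments. Unset Strict Implicit. Unset Printing Implicit Defensive.
Import Order.TTheory GRing.Theory Num.Theory.
Import numFieldNormedType.Exports.
Local Open Scope classical_set_scope.
Local Open Scope ring_scope.

Lemma span_sub (R : realType) (n : nat) (C : set 'rV[R]_n) x : C x -> Defs.span C x.
Proof.
move=> Cx; exists 1%N, (fun _ => 1), (fun _ => x); split => //.
by rewrite big_ord1 scale1r.
Qed.

Lemma span0 (R : realType) (n : nat) (C : set 'rV[R]_n) : Defs.span C 0.
Proof. by exists 0%N, (fun _ => 0), (fun _ => 0); split => [[]|]; rewrite ?big_ord0. Qed.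

Lemma spanD (R : realType) (n : nat) (C : set 'rV[R]_n) x y :
  Defs.span C x -> Defs.span C y -> Defs.span C (x + y).
Proof.
move=> [k1 [c1 [v1 [Hv1 ->]]]] [k2 [c2 [v2 [Hv2 ->]]]].
exists (k1 + k2)%N, (fun i => match fintype.split i with inl j => c1 j | inr j => c2 j end),
  (fun i => match fintype.split i with inl j => v1 j | inr j => v2 j end); split.
  by move=> i; case: (fintype.split i).
rewrite big_split_ord /=; congr (_ + _); apply: eq_bigr => i _.
  by have /= -> := unsplitK (inl i : 'I_k1 + 'I_k2).
by have /= -> := unsplitK (inr i : 'I_k1 + 'I_k2).
Qed.

Lemma spanZ (R : realType) (n : nat) (C : set 'rV[R]_n) (t : R) x :
  Defs.span C x -> Defs.span C (t *: x).
Proof.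
move=> [k [c [v [Hv ->]]]]; exists k, (fun i => t * c i), v; split => //.
by rewrite scaler_sumr; apply: eq_bigr => i _; rewrite scalerA.
Qed.

Lemma dotvDl (R : realType) (n : nat) (a a' x : 'rV[R]_n) :
  dotv (a + a') x = dotv a x + dotv a' x.
Proof. by rewrite /dotv mulmxDl mxE. Qed.

Lemma dotvZl (R : realType) (n : nat) (t : R) (a x : 'rV[R]_n) :
  dotv (t *: a) x = t * dotv a x.
Proof. by rewrite /dotv -scalemxAl mxE. Qed.

Lemma dotvDr (R : realType) (n : nat) (a x x' : 'rV[R]_n) :
  dotv a (x + x') = dotv a x + dotv a x'.
Proof. by rewrite /dotv linearD /= mulmxDr mxE. Qed.

Lemma dotvZr (R : realType) (n : nat) (t : R) (a x : 'rV[R]_n) :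
  dotv a (t *: x) = t * dotv a x.
Proof. by rewrite /dotv linearZ /= -scalemxAr mxE. Qed.

Lemma dotv0r (R : realType) (n : nat) (a : 'rV[R]_n) : dotv a 0 = 0.
Proof. by rewrite /dotv trmx0 mulmx0 mxE. Qed.

Lemma perp_span (R : realType) (n : nat) (C : set 'rV[R]_n) a :
  in_perp C a -> forall x, Defs.span C x -> dotv a x = 0.
Proof.
move=> Hp x [k [c [v [Hv ->]]]].
elim/big_rec: _ => [|i y _ Hy]; first by rewrite dotv0r.
by rewrite dotvDr dotvZr Hp // mulr0 add0r.
Qed.
From mathcomp Require Import lra.

Lemma dotv_AT (R : realType) (n m : nat) (A : 'M[R]_(n, m)) y x :
  dotv (y *m A^T) x = ((x *m A) *m y^T) 0 0.
Proof.
rewrite /dotv; have -> : y *m A^T *m x^T = (x *m A *m y^T)^T.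
  by rewrite !trmx_mul trmxK mulmxA.
by rewrite mxE.
Qed.

Lemma relint_perp (R : realType) (n m : nat) (A : 'M[R]_(n, m)) b
  (Kb : set 'rV[R]_n) x0 y :
  relint Kb x0 -> x0 *m A = b -> in_dual Kb (y *m A^T) ->
  (b *m y^T) 0 0 = 0 -> in_perp Kb (y *m A^T).
Proof.
move=> [Kx0 [U [nU sub]]] Hx0 Hd Hb x Kx.
have f0 : dotv (y *m A^T) x0 = 0 by rewrite dotv_AT Hx0.
have := Hd x Kx; rewrite le_eqVlt => /orP[/eqP <- //|fpos].
move/nbhs_ballP: nU => [e /= e0 He].
pose t := e / (2 * (`|x| + 1)).
have t0 : 0 < t by apply: divr_gt0 => //; rewrite mulr_gt0 // ltr_wpDl.
have Kz : Kb (x0 - t *: x).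
  apply: sub; split.
    apply: He; rewrite -ball_normE /ball_ /= opprB addrC subrK normrZ gtr0_norm //.
    rewrite /t mulrAC ltr_pdivrMr ?mulr_gt0 ?ltr_wpDl //.
    have nx := normr_ge0 x.
    nra.
  by apply: spanD; [apply: span_sub | rewrite -scaleNr; apply/spanZ/span_sub].
have := Hd _ Kz; rewrite dotvDr -scaleNr dotvZr f0 add0r.
by rewrite mulNr oppr_ge0 pmulr_rle0 // leNgt fpos.
Qed.

Lemma fr_cone_sub (R : realType) (n m : nat) (A : 'M[R]_(n, m)) zs :
  forall C x, fr_cone A C zs x -> C x.
Proof.
elim: zs => [//|y zs IH] C x /= /IH; by case.
Qed.

Lemma fr_incl (R : realType) (n m : nat) (A : 'M[R]_(n, m)) b
  (Kb : set 'rV[R]_n) x0 zs :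
  relint Kb x0 -> x0 *m A = b ->
  forall C, fr_valid A b C zs -> (forall x, Kb x -> C x) ->
  forall x, Kb x -> fr_cone A C zs x.
Proof.
move=> rx0 Hx0; elim: zs => [//|y zs IH] C /= [_ Hd _ Hb Hv] sub.
apply: IH => // x Kx; split; first exact: sub.
apply: (relint_perp rx0 Hx0) => // z Kz; exact/Hd/sub.
Qed.

Fixpoint Wz (R : realType) (m : nat) (zs : seq 'rV[R]_m) : 'M[R]_m :=
  match zs with
  | [::] => 0
  | y :: zs' => (y + Wz zs')%MS
  end.

Lemma Wz_perp (R : realType) (n m : nat) (A : 'M[R]_(n, m)) zs :
  forall C w, (w <= Wz zs)%MS -> in_perp (fr_cone A C zs) (w *m A^T).
Proof.
elim: zs => [|y zs IH] C w /=.
  by rewrite submx0 => /eqP -> x _; rewrite mul0mx /dotv mul0mx mxE.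
move=> /sub_addsmxP [[u1 u2] /= ->] x Hx.
have [c ->] : exists c, u1 *m y = c *: y.
  by apply/sub_rVP; apply: submxMl.
rewrite mulmxDl dotvDl -scalemxAl dotvZl.
have [_ ->] := fr_cone_sub Hx.
by rewrite mulr0 add0r (IH _ _ _ x Hx) // submxMl.
Qed.

Lemma rank_add_row (R : realType) (m : nat) (P : 'M[R]_m) (y : 'rV[R]_m) :
  ~~ (y <= P)%MS -> \rank (P + y)%MS = (\rank P).+1.
Proof.
move=> yP.
have y0 : y != 0 by apply: contraNneq yP => ->; apply: sub0mx.
have ry : \rank y = 1%N.
  by apply/eqP; rewrite eqn_leq rank_leq_row lt0n mxrank_eq0.
have rc : \rank (P :&: y)%MS = 0%N.
  have := mxrank_leqif_sup (capmxSr P y); rewrite ry.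
  move=> [le1 eqc]; move: le1; rewrite leq_eqVlt ltnS leqn0 => /orP[/eqP h|/eqP //].
  by move: eqc; rewrite h eqxx => /esym H; case/negP: yP; apply: submx_trans H (capmxSl _ _).
by have := mxrank_sum_cap P y; rewrite rc ry addn0 addn1.
Qed.

Lemma rank_inv (R : realType) (n m : nat) (A : 'M[R]_(n, m)) b zs :
  forall C (P : 'M[R]_m), fr_valid A b C zs ->
  (forall v, (v <= P)%MS -> in_perp C (v *m A^T)) ->
  \rank (P + Wz zs)%MS = (\rank P + size zs)%N.
Proof.
elim: zs => [|y zs IH] C P /=.
  by move=> _ _; rewrite addsmx0 addn0.
move=> [_ _ np _ Hv] HP.
rewrite addsmxA (IH (fr_step A C y)) //.
  rewrite rank_add_row ?addSnnS //.
  by apply: contra_notN np => /HP.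
move=> v /sub_addsmxP [[u1 u2] /= ->] x [Cx Hx].
have [c ->] : exists c, u2 *m y = c *: y.
  by apply/sub_rVP; apply: submxMl.
by rewrite mulmxDl dotvDl -scalemxAl dotvZl Hx mulr0 addr0 (HP _ _ x Cx) // submxMl.
Qed.

Lemma bigmax_wit (N : nat) (P : pred 'I_N.+1) :
  exists2 d : 'I_N.+1, (val d = 0%N) \/ P d & (\max_(d < N.+1 | P d) (d : nat))%N = d.
Proof.
case: (posnP #|P|) => h.
  exists ord0; first by left.
  by apply: big_pred0 => i; have := card0_eq h i; rewrite !unfold_in /= => ->.
have [i0 Hi0 Heq] := eq_bigmax_cond (fun d : 'I_N.+1 => (d : nat)) h.
exists i0; first by right.
by rewrite -Heq; apply: eq_bigl => i; rewrite ?inE.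
Qed.

Lemma selfdot0 (R : realType) (m : nat) (v : 'rV[R]_m) :
  (v *m v^T) 0 0 = 0 -> v = 0.
Proof.
rewrite mxE => H; apply/matrixP => i j; rewrite [i]ord1 mxE.
have H' : \sum_(j < m) v 0 j * v 0 j = 0.
  by rewrite -[RHS]H; apply: eq_bigr => k _; rewrite [in RHS]mxE.
have Hz : forall k, v 0 k * v 0 k = 0.
  by move=> k; apply: (psumr_eq0P _ H') => // l _; rewrite -expr2 sqr_ge0.
by move/eqP: (Hz j); rewrite mulf_eq0 orbb => /eqP.
Qed.
From mathcomp Require Import zify.

Theorem corollary4p2 (R : realType) (n m : nat)
  (K : set 'rV[R]_n) (A : 'M[R]_(n, m)) (b : 'rV[R]_m)
  (ys : seq 'rV[R]_m) :
  closed_convex_cone K ->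
  row_full A ->
  (exists x, K x /\ x *m A = b) ->
  ~ strictly_feasible A b K ->
  fr_run A b K ys ->
  let S := image_span A (fr_cone A K ys) in
  [/\ is_subspace S,
      (dim_set S <= m - maxsd A b K)%N &
      (maxsd A b K <= m - dim_set S)%N].
Proof.
move=> _ _ _ _ [_ [x0 [rx0 Ax0]]] S.
set Kb := fr_cone A K ys.
have subS : is_subspace S.
  split.
  - by exists 0; split; [apply: span0 | rewrite mul0mx].
  - move=> _ _ [x1 [s1 ->]] [x2 [s2 ->]].
    by exists (x1 + x2); split; [apply: spanD | rewrite mulmxDl].
  - move=> t _ [x1 [s1 ->]].
    by exists (t *: x1); split; [apply: spanZ | rewrite scalemxAl].
have [zs [vzs szs]] : exists zs, fr_valid A b K zs /\ size zs = maxsd A b K.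
  rewrite /maxsd; case: (bigmax_wit (fun d : 'I_n.+1 => `[< exists ys0, fr_run A b K ys0 /\ size ys0 = d >])) => d [d0|/asboolP [zs [[v _] s]]] ->.
    by exists [::]; rewrite d0.
  by exists zs.
have [k [M [rfM rowsM <-]]] : exists k (M : 'M[R]_(k, m)),
    [/\ row_free M, forall i, S (row i M) & k = dim_set S].
  rewrite /dim_set; case: (bigmax_wit (fun k : 'I_m.+1 => `[< exists M : 'M[R]_(k, m), row_free M /\ forall i, S (row i M) >])) => d [d0|/asboolP [M [rf rw]]] ->.
    exists 0%N, 0; split => //; last by case.
    by rewrite /row_free mxrank0.
  by exists d, M.
have rW : \rank (Wz zs) = size zs.
  have := @rank_inv R n m A b zs K 0 vzs.
  rewrite adds0mx mxrank0 add0n; apply => v; rewrite submx0 => /eqP -> x _.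
  by rewrite mul0mx /dotv mul0mx mxE.
have incl : forall x, Kb x -> fr_cone A K zs x.
  apply: (fr_incl rx0 Ax0 vzs) => x; exact: fr_cone_sub.
have orth : forall (i : 'I_k) (w : 'rV[R]_m), (w <= Wz zs)%MS -> (row i M *m w^T) 0 0 = 0.
  move=> i w Hw; have [x [sx ->]] := rowsM i.
  rewrite -dotv_AT; apply: (perp_span _ sx) => y Ky.
  exact: (Wz_perp (C := K) Hw (incl _ Ky)).
have cap0 : \rank (M :&: Wz zs)%MS = 0%N.
  apply/eqP; rewrite mxrank_eq0 -submx0; apply/row_subP => i.
  set v := row i _.
  have vM : (v <= M)%MS by apply: submx_trans (row_sub _ _) (capmxSl _ _).
  have vW : (v <= Wz zs)%MS by apply: submx_trans (row_sub _ _) (capmxSr _ _).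
  suff -> : v = 0 by apply: sub0mx.
  apply: selfdot0; have [u Hu] := submxP vM.
  rewrite {1}Hu -mulmxA.
  have -> : M *m v^T = 0.
    apply/matrixP => j l; rewrite [l]ord1.
    by have := orth j _ vW; rewrite -row_mul mxE => ->; rewrite mxE.
  by rewrite mulmx0 mxE.
have key : (k + maxsd A b K <= m)%N.
  have := mxrank_sum_cap M (Wz zs); rewrite cap0 addn0 rW szs (eqP rfM) => <-.
  exact: rank_leq_col.
split => //; lia.
Qed.
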